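(* Let $A$ be a nontrivial commutative group and $R$ a nonzero commutative ring. (a) If $A$ has an element of infinite order, then the augmentation ideal of $R[A]$ is not nilpotent. (b) The augmentation ideal of $\mathbb{Z}[A]$ is not nilpotent. (c) Let $m,N\ge2$. If there is a prime $p$ with $p\mid N$ and $p\nmid m$, and $A$ has an element of order $m$, then $\nu((\mathbb{Z}/N\mathbb{Z})[A])=\infty$. (d) If $A$ is finite, then $\nu(R[A])\ge\max(\exp(A),\operatorname{rank}(A))$.
   Context: For a commutative ring $R$ and commutative group $A$, the augmentation ideal $I$ of the group ring $R[A]$ is the kernel of $\sum r_a[a]\mapsto\sum r_a$; $\nu(R[A])$ is the least $n\in\mathbb N$ with $I^n=0$, or $\infty$ if none exists. For a finite commutative group $A$, $\exp(A)$ is its exponent and $\operatorname{rank}(A)$ is the least $n$ such that $A$ is a direct sum of $n$ cyclic groups. *)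

(* Defs.v *)
From HB Require Import structures.
From mathcomp Require Import all_boot all_order all_algebra all_fingroup all_solvable.
From mathcomp Require Import freeg.

Set Implicit Arguments.
Unset Strict Implicit.
Unset Printing Implicit Defensive.

Import GRing.Theory.
Local Open Scope ring_scope.

(* The group ring R[A] of a (possibly infinite) commutative group A   *)
(* (a zmodType, written additively) over a commutative ring R.         *)
(* Its elements are the finite formal sums \sum_a r_a [a], realised as *)
(* multinomials' free module {freeg A / R} (canonical representation,  *)
(* so Leibniz equality is equality in R[A]).  Multiplication is the    *)
Section GroupRing.
Variables (R : comNzRingType) (A : zmodType).

Definition gring := {freeg A / R}.

Definition gr_mono (r : R) (a : A) : gring := << r *g a >>.

Definition gr_one : gring := gr_mono 1 0.

Definition gr_mul (f g : gring) : gring :=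
  \sum_(x <- dom f) \sum_(y <- dom g) gr_mono (coeff x f * coeff y g) (x + y).

Definition augmentation (f : gring) : R := \sum_(x <- dom f) coeff x f.

Definition gr_prod (s : seq gring) : gring := foldr gr_mul gr_one s.

(* I^n = 0, where I is the augmentation ideal: since I^n is additively *)
(* spanned by the products of n elements of I, this says every product *)
(* of n elements of augmentation 0 vanishes.                          *)
Definition aug_pow_zero (n : nat) : Prop :=
  forall s : n.-tuple gring,
    all (fun f => augmentation f == 0) s -> gr_prod s = 0.

(* nu(R[A]) = infinity : no power of I vanishes *)
Definition aug_not_nilpotent : Prop := forall n, ~ aug_pow_zero n.

(* nu(R[A]) >= k  (with nu = infinity if I is not nilpotent) *)
Definition nu_ge (k : nat) : Prop := forall n, aug_pow_zero n -> (k <= n)%N.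

End GroupRing.

Definition infinite_order (A : zmodType) (a : A) : Prop :=
  forall k : nat, (0 < k)%N -> a *+ k != 0.

Definition has_order (A : zmodType) (a : A) (m : nat) : Prop :=
  [/\ (0 < m)%N, a *+ m = 0 & forall k : nat, (0 < k < m)%N -> a *+ k != 0].

(* rank of a finite abelian group: least n such that A is a direct sum *)
(* of n cyclic groups (internal direct product of n cyclic subgroups). *)
Definition cyc_decomp (gT : finGroupType) (G : {set gT}) (k : nat) : bool :=
  [exists t : k.-tuple gT, (\big[dprod/1]_(x <- t) <[x]>)%g == G].

Lemma cyc_decomp_ex (A : finZmodType) : exists k, cyc_decomp [set: A] k.
Proof.
have cA : abelian [set: A].
  by apply/centsP=> x _ y _; apply: addrC.
have [b defG _] := abelian_structure cA.
exists (size b); apply/existsP; exists (in_tuple b); exact/eqP.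
Qed.

Definition ab_rank (A : finZmodType) : nat := ex_minn (cyc_decomp_ex A).

Definition ab_exponent (A : finZmodType) : nat := exponent [set: A].

(* Main.v *)
Require Import Defs.
From HB Require Import structures.
From mathcomp Require Import all_boot all_order all_algebra all_fingroup all_solvable.
From mathcomp Require Import freeg.
From Stdlib Require Import Classical.
Set Implicit Arguments. Unset Strict Implicit. Unset Printing Implicit Defensive.
Import GRing.Theory Num.Theory.
Local Open Scope ring_scope.
Section Alg.
Variables (R : comNzRingType) (A : zmodType).
Local Notation G := {freeg A / R}.
Local Notation gmul := (@gr_mul R A).
Local Notation gprod := (@gr_prod R A).

Section L.
Variables (M : lmodType R) (F : A -> M).
HB.instance Definition _ := GRing.isAdditive.Build G M (fglift F) (lift_is_additive F).
Lemma fgliftE D : fglift F D = \sum_(x <- dom D) coeff x D *: F x.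
Proof.
rewrite -{1}[D]freeg_sumE raddf_sum; apply: eq_bigr => x _; exact: liftU.
Qed.
End L.
Lemma fglift_ext (M : lmodType R) (F F' : A -> M) D : F =1 F' -> fglift F D = fglift F' D.
Proof. by move=> e; rewrite !fgliftE; apply: eq_bigr => x _; rewrite e. Qed.
Lemma fglift_scalef (M : lmodType R) (F : A -> M) c D : fglift (fun x => c *: F x) D = c *: fglift F D.
Proof.
rewrite !fgliftE scaler_sumr; apply: eq_bigr => x _.
by rewrite !scalerA mulrC.
Qed.

Lemma monoZ c d (z : A) : c *: << d *g z >> = << c * d *g z >> :> G.
Proof. by apply/eqP/freeg_eqP => x; rewrite coeffZ !coeffU mulrA. Qed.

Lemma fgliftZ (M : lmodType R) (F : A -> M) c D :
  fglift F (c *: D) = c *: fglift F D.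
Proof.
rewrite [in RHS]fgliftE -{1}[D]freeg_sumE scaler_sumr raddf_sum scaler_sumr.
by apply: eq_bigr => x _; rewrite monoZ scalerA; exact: liftU.
Qed.

Definition shift (b : A) (g : G) : G := fglift (fun y => << 1 *g (b + y) >>) g.

Lemma gr_mulE f g : gmul f g = fglift (fun x => shift x g) f.
Proof.
rewrite fgliftE /gr_mul; apply: eq_bigr => x _; rewrite /shift fgliftE scaler_sumr.
by apply: eq_bigr => y _; rewrite /gr_mono !monoZ mulr1.
Qed.

Lemma gr_mulBl f1 f2 g : gmul (f1 - f2) g = gmul f1 g - gmul f2 g.
Proof. by rewrite !gr_mulE raddfB. Qed.

Lemma gr_mul_suml I (r : seq I) (F : I -> G) g :
  gmul (\sum_(i <- r) F i) g = \sum_(i <- r) gmul (F i) g.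
Proof. by rewrite gr_mulE raddf_sum; apply: eq_bigr => i _; rewrite gr_mulE. Qed.

Lemma gr_mulU c b g : gmul << c *g b >> g = c *: shift b g.
Proof. by rewrite gr_mulE liftU. Qed.

Lemma gr_mulZr c f g : gmul f (c *: g) = c *: gmul f g.
Proof.
rewrite !gr_mulE -fglift_scalef; apply: fglift_ext => x.
by rewrite /shift fgliftZ.
Qed.

Lemma shiftU b c z : shift b << c *g z >> = << c *g (b + z) >>.
Proof. by rewrite /shift liftU monoZ mulr1. Qed.

Lemma coeff_shift x b g : coeff x (shift b g) = coeff (x - b) g.
Proof.
rewrite /shift fgliftE raddf_sum [RHS]/coeff (fgliftE (fun y => (y == x - b)%:R : R^o)).
apply: eq_bigr => y _.
transitivity (coeff y g * coeff x << 1 *g (b + y) >>); first exact: coeffZ.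
rewrite coeffU mul1r /GRing.scale /=.
by rewrite [in RHS]eq_sym subr_eq [y + b]addrC eq_sym.
Qed.

Lemma coeff_mulU x c b g : coeff x (gmul << c *g b >> g) = c * coeff (x - b) g.
Proof. by rewrite gr_mulU coeffZ coeff_shift. Qed.

Lemma augE f : @augmentation R A f = fglift (fun _ => (1 : R^o)) f.
Proof. by rewrite fgliftE; apply: eq_bigr => x _; rewrite /GRing.scale /= mulr1. Qed.

Lemma aug_additive : zmod_morphism (@augmentation R A).
Proof. by move=> x y; rewrite !augE raddfB. Qed.
HB.instance Definition _ := GRing.isAdditive.Build G R (@augmentation R A) aug_additive.

Lemma augU c (z : A) : @augmentation R A << c *g z >> = c.
Proof. by rewrite augE liftU /GRing.scale /= mulr1. Qed.

Lemma gr_prod_cons f s : gprod (f :: s) = gmul f (gprod s).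
Proof. by []. Qed.


Lemma fglift_id g : fglift (fun y => << 1 *g y >> : G) g = g.
Proof.
rewrite fgliftE -{3}[g]freeg_sumE; apply: eq_bigr => y _.
by rewrite monoZ mulr1.
Qed.

Lemma shift0 g : shift 0 g = g.
Proof. by rewrite /shift -[RHS]fglift_id; apply: fglift_ext => y; rewrite add0r. Qed.

Lemma gr_mul1r f : gmul f (gr_one R A) = f.
Proof.
rewrite gr_mulE -[RHS]fglift_id; apply: fglift_ext => x.
by rewrite /gr_one /gr_mono shiftU addr0.
Qed.

Lemma sign_neq0 n : (-1) ^+ n != 0 :> R.
Proof.
apply/eqP => h; have : (-1) ^+ n * (-1) ^+ n = 1 :> R.
  by rewrite -exprMn mulrNN mulr1 expr1n.
by rewrite h mul0r => /eqP; rewrite eq_sym oner_eq0.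
Qed.

Lemma gr_one_neq0 : gr_one R A != 0.
Proof.
apply/eqP => h; have := coeffU (1 : R) (0 : A) 0.
rewrite -/(gr_mono 1 0) -/(gr_one R A) h coeff0 eqxx mulr1 => /eqP.
by rewrite eq_sym oner_eq0.
Qed.

Definition om (b : A) : G := << 1 *g 0 >> - << 1 *g b >>.

Lemma aug_om b : @augmentation R A (om b) = 0.
Proof. by rewrite /om raddfB /= !augU subrr. Qed.

Lemma coeff_om_mul x b g : coeff x (gmul (om b) g) = coeff x g - coeff (x - b) g.
Proof. by rewrite gr_mulBl coeffB !coeff_mulU subr0 !mul1r. Qed.

Lemma pow_om (a : A) N n : (forall j, (0 < j <= N)%N -> a *+ j != 0) -> (n <= N)%N ->
  coeff (a *+ n) (gprod (nseq n (om a))) = (-1) ^+ n /\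
  (forall j, (n < j <= N)%N -> coeff (a *+ j) (gprod (nseq n (om a))) = 0).
Proof.
move=> Ha; elim: n => [|n IH] Hn.
  split.
    by rewrite /= /gr_one /gr_mono coeffU mulr0n eqxx mulr1.
  move=> j /andP[j0 jN]; rewrite /= /gr_one /gr_mono coeffU.
  by rewrite eq_sym (negbTE (Ha j _)) ?mulr0 // j0.
have [IH1 IH2] := IH (ltnW Hn); split.
  rewrite [nseq _ _]/= gr_prod_cons coeff_om_mul mulrSr addrK -mulrSr IH1 IH2 ?ltnSn //.
  by rewrite sub0r exprS mulN1r.
move=> j /andP[lt jN]; case: j lt jN => // j lt jN.
rewrite [nseq _ _]/= gr_prod_cons coeff_om_mul mulrSr addrK -mulrSr !IH2 ?subr0 //.
  by rewrite -ltnS lt ltnW.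
by rewrite ltnW ?ltnS // jN.
Qed.

Lemma not_nil_exp (a : A) n : (forall j, (0 < j <= n)%N -> a *+ j != 0) ->
  ~ aug_pow_zero R A n.
Proof.
move=> Ha H; have := H (nseq_tuple n (om a)).
rewrite /= all_nseq /= aug_om eqxx orbT => /(_ isT) h.
have [c _] := pow_om Ha (leqnn n); move: c; rewrite h coeff0 => /eqP.
by rewrite eq_sym (negbTE (sign_neq0 n)).
Qed.

Lemma rot (M : zmodType) (F : nat -> M) m k : (forall j, F (j + m)%N = F j) ->
  \sum_(0 <= j < m) F (k + j)%N = \sum_(0 <= j < m) F j.
Proof.
move=> per; elim: k => [|k IH]; first by apply: eq_bigr => j _; rewrite add0n.
rewrite -IH; set H := fun j => F (k + j)%N.
have e1 : \sum_(0 <= i < m.+1) H i = H 0%N + \sum_(0 <= i < m) H i.+1.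
  by rewrite big_nat_recl.
have e2 : \sum_(0 <= i < m.+1) H i = \sum_(0 <= i < m) H i + H m.
  by rewrite big_nat_recr.
have hm : H m = H 0%N by rewrite /H addn0 per.
have e : \sum_(0 <= i < m) H i.+1 = \sum_(0 <= i < m) H i.
  by apply: (@addrI _ (H 0%N)); rewrite -e1 e2 hm addrC.
rewrite -e; apply: eq_bigr => j _; by rewrite /H addSnnS.
Qed.

Definition Nm (a : A) m : G := \sum_(0 <= j < m) << 1 *g a *+ j >>.
Definition em (a : A) m : G := << m%:R *g 0 >> - Nm a m.

Lemma augB f g : @augmentation R A (f - g) = @augmentation R A f - @augmentation R A g.
Proof. exact: raddfB. Qed.
Lemma aug_sum (r : seq nat) (F : nat -> G) :
  @augmentation R A (\sum_(i <- r) F i) = \sum_(i <- r) @augmentation R A (F i).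
Proof. exact: raddf_sum. Qed.

Lemma aug_em a m : @augmentation R A (em a m) = 0.
Proof.
rewrite /em /Nm augB aug_sum augU.
under eq_bigr do rewrite augU.
by rewrite sumr_const_nat subn0 subrr.
Qed.

Lemma shiftB b f g : shift b (f - g) = shift b f - shift b g.
Proof. exact: raddfB. Qed.
Lemma shift_sum b (r : seq nat) (F : nat -> G) :
  shift b (\sum_(i <- r) F i) = \sum_(i <- r) shift b (F i).
Proof. exact: raddf_sum. Qed.

Lemma coeff_sum x (r : seq nat) (F : nat -> G) :
  coeff x (\sum_(i <- r) F i) = \sum_(i <- r) coeff x (F i).
Proof. exact: raddf_sum. Qed.

Lemma shift_Nm (a : A) m k : a *+ m = 0 -> shift (a *+ k) (Nm a m) = Nm a m.
Proof.
move=> am; rewrite /Nm shift_sum.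
transitivity (\sum_(0 <= j < m) (<< 1 *g a *+ (k + j) >> : G)).
  by apply: eq_bigr => j _; rewrite shiftU mulrnDr.
rewrite (@rot _ (fun j => (<< 1 *g a *+ j >> : G))) // => j; by rewrite mulrnDr am addr0.
Qed.

Lemma em_sq (a : A) m : a *+ m = 0 -> gmul (em a m) (em a m) = m%:R *: em a m.
Proof.
move=> am; rewrite {1}/em gr_mulBl gr_mulU shift0 /Nm gr_mul_suml.
suff -> : \sum_(0 <= i < m) gmul << 1 *g a *+ i >> (em a m) = 0 by rewrite subr0.
transitivity (\sum_(0 <= i < m) (<< m%:R *g a *+ i >> - Nm a m)).
  apply: eq_bigr => i _; rewrite gr_mulU scale1r /em shiftB shiftU addr0.
  by rewrite shift_Nm.
rewrite sumrB sumr_const_nat subn0 -scaler_nat /Nm scaler_sumr.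
by apply/eqP; rewrite subr_eq0; apply/eqP; apply: eq_bigr => i _; rewrite monoZ mulr1.
Qed.

Lemma em_pow (a : A) m n : a *+ m = 0 ->
  gprod (nseq n.+1 (em a m)) = (m%:R) ^+ n *: em a m.
Proof.
move=> am; elim: n => [|n IH].
  by rewrite /= -/(gr_one R A) gr_mul1r expr0 scale1r.
rewrite [nseq _ _]/= gr_prod_cons IH gr_mulZr em_sq // scalerA -exprSr.
by [].
Qed.

Lemma coeff_em (a : A) m : has_order a m -> (2 <= m)%N -> coeff a (em a m) = -1.
Proof.
case=> m0 am hk m2.
have a0 : a != 0 by have := hk 1%N; rewrite mulr1n; apply; rewrite m2.
rewrite /em coeffB coeffU (_ : (0 == a) = false) ?mulr0 ?sub0r.
  congr (- _); rewrite /Nm coeff_sum.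
  case: m m0 am hk m2 => [|[|m]] // m0 am hk _.
  rewrite big_nat_recl // big_nat_recl // coeffU mulr0n eq_sym (negbTE a0) mulr0 add0r.
  rewrite coeffU mulr1n eqxx mulr1 big_nat big1 ?addr0 // => j /andP[_ jm].
  rewrite coeffU mul1r mulrSr.
  have -> : (a *+ j.+1 + a == a) = (a *+ j.+1 == 0).
    by rewrite -subr_eq0 addrK.
  have : (0 < j.+1 < m.+2)%N by rewrite /= ltnS ltnW.
  by move/hk/negbTE => ->.
by rewrite eq_sym; apply/negbTE.
Qed.

Lemma not_nil_idem (a : A) m : has_order a m -> (2 <= m)%N ->
  (forall n, (m ^ n)%:R != 0 :> R) -> aug_not_nilpotent R A.
Proof.
move=> ho m2 hn n H; case: n H => [|n] H.
  have := H [tuple] isT; rewrite /= => /eqP; apply/negP; exact: gr_one_neq0.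
have := H (nseq_tuple n.+1 (em a m)).
rewrite /= aug_em eqxx /= all_nseq aug_em eqxx orbT => /(_ isT).
have [_ am _] := ho.
rewrite -gr_prod_cons (_ : em a m :: nseq n (em a m) = nseq n.+1 (em a m)) // em_pow // => /(congr1 (coeff a)); rewrite coeffZ coeff_em // coeff0 mulrN1.
by move/eqP; rewrite oppr_eq0 -natrX (negbTE (hn n)).
Qed.

End Alg.
Section Rank.
Variables (R : comNzRingType) (A : finZmodType).
Local Notation G := {freeg A / R}.
Local Notation gmul := (@gr_mul R A).
Local Notation gprod := (@gr_prod R A).

Fixpoint good (s : seq A) : bool :=
  if s is b :: s' then (b \notin <<[set y in s']>>%g) && good s' else true.

Lemma sum_in_gen (s t : seq A) : {subset s <= t} ->
  \sum_(x <- s) x \in <<[set y in t]>>%g.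
Proof.
elim: s => [|b s IH] sub; first by rewrite big_nil; exact: (group1 _).
rewrite big_cons; apply: (groupM (G := <<[set y in t]>>%G)).
  by apply: mem_gen; rewrite inE sub ?mem_head.
by apply: IH => x xs; apply: sub; rewrite inE xs orbT.
Qed.

Lemma gen_sub (s : seq A) b : (<<[set y in s]>> \subset <<[set y in b :: s]>>)%g.
Proof. by apply: genS; apply/subsetP => x; rewrite !inE => ->; rewrite orbT. Qed.

Lemma prod_good (s : seq A) : good s ->
  coeff (\sum_(x <- s) x) (gprod (map (@om R A) s)) = (-1) ^+ size s /\
  (forall x, x \notin <<[set y in s]>>%g -> coeff x (gprod (map (@om R A) s)) = 0).
Proof.
elim: s => [|b s IH]; rewrite [good _]/=.
  move=> _; split; first by rewrite big_nil /= /gr_one /gr_mono coeffU eqxx mulr1.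
  move=> x; rewrite /= /gr_one /gr_mono coeffU.
  have -> : [set y in [::] : seq A] = set0 by apply/setP => y; rewrite !inE.
  rewrite gen0 inE => /negbTE h.
  by rewrite (_ : (0 == x) = false) ?mulr0 // eq_sym; exact: h.
case/andP=> bn gs; have [IH1 IH2] := IH gs.
have sg := sum_in_gen (s := s) (t := s) (fun x h => h).
split.
  rewrite big_cons [map _ _]/= gr_prod_cons [size _]/= coeff_om_mul [b + _]addrC addrK IH1 IH2.
    by rewrite sub0r exprS mulN1r.
  apply: contra bn => h.
  have e : ((\sum_(j <- s) j + b) * (\sum_(x <- s) x)^-1)%g = b.
    by rewrite -[LHS]/(\sum_(j <- s) j + b - \sum_(x <- s) x) addrC addKr.
  by rewrite -e; exact: groupM h (groupVr sg).
move=> x xn; rewrite [map _ _]/= gr_prod_cons coeff_om_mul !IH2 ?subrr //.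
  apply: contra xn => h.
  have h1 : x - b \in <<[set y in b :: s]>>%g := subsetP (gen_sub s b) _ h.
  have h2 : b \in <<[set y in b :: s]>>%g by apply: mem_gen; rewrite inE mem_head.
  have e : ((x - b) * b)%g = x by rewrite -[LHS]/(x - b + b) subrK.
  by rewrite -e groupM.
by apply: contra xn => h; apply: (subsetP (gen_sub s b)).
Qed.

End Rank.
Section D.
Variables (R : comNzRingType) (A : finZmodType).

Lemma cA : abelian [set: A].
Proof. by apply/centsP=> x _ y _; apply: addrC. Qed.

Lemma exists_good n : (n < ('r([set: A]))%g)%N -> exists s : seq A, good s /\ size s = n.
Proof.
elim: n => [|n IH] lt; first by exists [::].
have [s [gs ss]] := IH (ltnW lt).
have : ~~ ([set: A] \subset <<[set y in s]>>%g).
  apply/negP => sub.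
  have e : <<[set y in s]>>%g = [set: A].
    by apply/eqP; rewrite eqEsubset subsetT sub.
  have := grank_min [set y in s]; rewrite e grank_abelian ?cA // cardsE.
  move=> h; have := leq_trans h (card_size s); rewrite ss => h2.
  by move: lt; rewrite ltnNge (ltnW (leq_ltn_trans h2 (ltnSn _))) .
case/subsetPn => b _ bn; exists (b :: s); split; last by rewrite /= ss.
by rewrite /= bn gs.
Qed.

Lemma not_nil_rank n : (n < ('r([set: A]))%g)%N -> ~ aug_pow_zero R A n.
Proof.
move=> lt H; have [s [gs ss]] := exists_good lt.
have sz : size (map (@om R A) s) == n by rewrite size_map ss.
have := H (Tuple sz); rewrite /= => h.
have [c _] := prod_good R gs.
move: c; rewrite h; last first.
  by apply/allP => f /mapP[b _ ->]; rewrite aug_om.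
rewrite coeff0 => /eqP; by rewrite eq_sym (negbTE (sign_neq0 R (size s))).
Qed.

Lemma ab_rank_le : (ab_rank A <= ('r([set: A]))%g)%N.
Proof.
rewrite /ab_rank; case: ex_minnP => k _ hmin.
have [b defG eb] := abelian_structure cA.
have hs : size b = ('r([set: A]))%g by rewrite -(size_map order) eb size_abelian_type // cA.
rewrite -hs; apply: hmin; apply/existsP; exists (in_tuple b); exact/eqP.
Qed.

Lemma part_d : nu_ge R A (maxn (ab_exponent A) (ab_rank A)).
Proof.
move=> n H; rewrite geq_max; apply/andP; split; rewrite leqNgt; apply/negP => lt.
  have [x _ ex] := exponent_witness (abelian_nil cA).
  apply: (@not_nil_exp R A x n) H => j /andP[j0 jn].
  have jx : (j < #[x])%g%N by rewrite -ex (leq_ltn_trans jn lt).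
  apply/negP => /eqP h.
  have : (#[x]%g %| j)%N by rewrite order_dvdn -[(x ^+ j)%g]/(x *+ j) h.
  move=> /(dvdn_leq j0); by rewrite leqNgt jx.
apply: (not_nil_rank (n := n)) H.
exact: leq_trans lt ab_rank_le.
Qed.
End D.

Theorem lemma3 :
  (* (a) *)
  (forall (R : comNzRingType) (A : zmodType),
     (exists a : A, a != 0) ->
     (exists a : A, infinite_order a) ->
     aug_not_nilpotent R A) /\
  (* (b) *)
  (forall A : zmodType,
     (exists a : A, a != 0) ->
     aug_not_nilpotent int A) /\
  (* (c) *)
  (forall (A : zmodType) (m N : nat),
     (exists a : A, a != 0) ->
     (2 <= m)%N -> (2 <= N)%N ->
     (exists p : nat, [/\ prime p, (p %| N)%N & ~~ (p %| m)%N]) ->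
     (exists a : A, has_order a m) ->
     aug_not_nilpotent 'Z_N A) /\
  (* (d) *)
  (forall (R : comNzRingType) (A : finZmodType),
     (exists a : A, a != 0) ->
     nu_ge R A (maxn (ab_exponent A) (ab_rank A))).
Proof.
have pa : forall (R : comNzRingType) (A : zmodType),
     (exists a : A, infinite_order a) -> aug_not_nilpotent R A.
  move=> R A [a ha] n; apply: (@not_nil_exp R A a n) => j /andP[j0 _]; exact: ha.
split; first by move=> R A _; exact: pa.
split.
  move=> A [a a0].
  case: (classic (exists k, (0 < k)%N && (a *+ k == 0))) => [ex|nex]; last first.
    apply: pa; exists a => k k0; apply/negP => /eqP ak; apply: nex.
    by exists k; rewrite k0 ak eqxx.
  have [m /andP[m0 /eqP am] hmin] := ex_minnP ex.
  have m2 : (2 <= m)%N.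
    case: m m0 am hmin => [|[|m]] // _ am _; by move: a0; rewrite -am mulr1n eqxx.
  apply: (@not_nil_idem int A a m) => //.
    split=> // k /andP[k0 km]; apply/negP => /eqP ak.
    by have := hmin k; rewrite k0 ak eqxx => /(_ isT); rewrite leqNgt km.
  move=> n; rewrite pnatr_eq0 expn_eq0 negb_and; apply/orP; left.
  by rewrite -lt0n (leq_trans _ m2).
split.
  move=> A m N _ m2 N2 [p [pp pN pm]] [a ho].
  apply: (@not_nil_idem 'Z_N A a m) => // n; apply/eqP => h.
  have := val_Zp_nat N2 (m ^ n); rewrite h /= => e.
  have : (N %| m ^ n)%N by rewrite /dvdn -e.
  move=> /(dvdn_trans pN); rewrite Euclid_dvdX //; by rewrite (negbTE pm).
move=> R A _; exact: part_d.
Qed.
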